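(* Let $I\subseteq\mathbb{R}$ be an interval, $a,b\in I$ with $a<b$, assume $h(\frac12)>0$, and let $f:I\to\mathbb{R}$ be $h$-convex on $I$ and integrable on $[a,b]$. Then $$\frac{1}{b-a}\int_a^b f(x)\,dx-\frac{1}{2h(\frac12)}f\Big(\frac{a+b}{2}\Big)\ \ge\ \left|\frac{1}{b-a}\int_a^b\Big|\frac{f(x)+f(a+b-x)}{2}\Big|\,dx-\frac{1}{2h(\frac12)}\Big|f\Big(\frac{a+b}{2}\Big)\Big|\right|\ \ge 0.$$
   Context: Let $J$ be an interval with $(0,1)\subseteq J$ and $h:J\to\mathbb{R}$ a non-negative function, not identically zero. A non-negative function $g$ defined on an interval $K$ is called $h$-convex on $K$ if for all $x,y\in K$ and all $t\in(0,1)$: $g(tx+(1-t)y)\le h(t)g(x)+h(1-t)g(y)$. *)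

(* Defs.v *)
From Stdlib Require Import Reals.
Open Scope R_scope.

Definition is_interval (I : R -> Prop) : Prop :=
  forall x y z, I x -> I y -> x <= z <= y -> I z.

Definition admissible_h (J : R -> Prop) (h : R -> R) : Prop :=
  is_interval J /\
  (forall t, 0 < t < 1 -> J t) /\
  (forall t, J t -> 0 <= h t) /\
  (exists t, J t /\ h t <> 0).

Definition h_convex (h : R -> R) (K : R -> Prop) (g : R -> R) : Prop :=
  (forall x, K x -> 0 <= g x) /\
  (forall x y t, K x -> K y -> 0 < t < 1 ->
     g (t * x + (1 - t) * y) <= h t * g x + h (1 - t) * g y).

(* Main.v *)
Require Import Defs.
From Stdlib Require Import Reals Lra.
From Coquelicot Require Import Coquelicot.
Open Scope R_scope.

Lemma refl_int (f : R -> R) a b : ex_RInt f a b ->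
  ex_RInt (fun x => f (a + b - x)) a b /\ RInt (fun x => f (a + b - x)) a b = RInt f a b.
Proof.
  intro H.
  assert (Hs : ex_RInt f (-1 * a + (a + b)) (-1 * b + (a + b))).
  { replace (-1 * a + (a + b)) with b by ring.
    replace (-1 * b + (a + b)) with a by ring. now apply ex_RInt_swap. }
  pose proof (ex_RInt_comp_lin f (-1) (a+b) a b Hs) as E1.
  pose proof (RInt_comp_lin f (-1) (a+b) a b Hs) as E2.
  pose proof (ex_RInt_scal _ a b (-1) E1) as E3.
  assert (Heq : forall x, scal (-1) (scal (-1) (f (-1 * x + (a + b)))) = f (a + b - x)).
  { intro x. unfold scal, plus, opp; simpl; unfold mult; simpl. replace (-1 * x + (a + b)) with (a+b-x) by ring. ring. }
  split.
  - apply (ex_RInt_ext _ _ a b (fun x _ => Heq x) E3).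
  - transitivity (RInt (fun x => scal (-1) (scal (-1) (f (-1 * x + (a + b))))) a b).
    { symmetry. apply RInt_ext. intros x _. apply Heq. }
    etransitivity. apply (RInt_scal (fun y => scal (-1) (f (-1 * y + (a + b)))) a b (-1) E1).
    etransitivity. apply (f_equal (scal (-1))). apply E2.
    replace (-1 * a + (a + b)) with b by ring.
    replace (-1 * b + (a + b)) with a by ring.
    pose proof (opp_RInt_swap f a b H) as Hx. rewrite <- Hx. generalize (RInt f a b). intro r. unfold scal, opp; simpl; unfold mult; simpl. revert r. change (forall r : R, -1 * - r = r). intro r. ring. Qed.

Theorem theorem15 (J : R -> Prop) (h : R -> R) (I : R -> Prop) (f : R -> R)
  (a b : R)
  (hJ : admissible_h J h)
  (hI : is_interval I) (ha : I a) (hb : I b) (hab : a < b)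
  (hhalf : 0 < h (1/2))
  (hf : h_convex h I f)
  (pr : Riemann_integrable f a b) :
  exists pr2 : Riemann_integrable
                 (fun x => Rabs ((f x + f (a + b - x)) / 2)) a b,
    (1 / (b - a)) * RiemannInt pr - 1 / (2 * h (1/2)) * f ((a + b) / 2)
      >= Rabs ((1 / (b - a)) * RiemannInt pr2
               - 1 / (2 * h (1/2)) * Rabs (f ((a + b) / 2)))
    /\ Rabs ((1 / (b - a)) * RiemannInt pr2
             - 1 / (2 * h (1/2)) * Rabs (f ((a + b) / 2))) >= 0.
Proof.
  destruct hf as [fpos fconv].
  assert (HI : forall x, a <= x <= b -> I x) by (intros; apply (hI a b); auto).
  assert (HI2 : forall x, a <= x <= b -> I (a + b - x)) by (intros; apply (hI a b); auto; lra).
  pose proof (ex_RInt_Reals_1 _ _ _ pr) as F.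
  destruct (refl_int f a b F) as [F2 R2].
  set (f2 := fun x => f (a + b - x)) in *.
  pose proof (ex_RInt_Reals_0 _ _ _ F2) as prf2.
  assert (V2 : RiemannInt prf2 = RiemannInt pr).
  { rewrite <- !RInt_Reals. exact R2. }
  pose proof (@RiemannInt_P10 f f2 a b 1 pr prf2) as prs.
  assert (Vs : RiemannInt prs = 2 * RiemannInt pr).
  { rewrite (@RiemannInt_P13 f f2 a b 1 pr prf2 prs). rewrite V2. ring. }
  pose proof (@RiemannInt_P10 (fct_cte 0) _ a b (/2) (@RiemannInt_P14 a b 0) prs) as prh.
  assert (Vh : RiemannInt prh = RiemannInt pr).
  { rewrite (@RiemannInt_P13 _ _ a b (/2) (@RiemannInt_P14 a b 0) prs prh). rewrite Vs.
    rewrite RiemannInt_P15. field. }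
  assert (Fg : ex_RInt (fun x => (f x + f (a + b - x)) / 2) a b).
  { apply (ex_RInt_ext (fun x => fct_cte 0 x + / 2 * (f x + 1 * f2 x))).
    - intros x _. unfold fct_cte, f2. assert (E : 0 + / 2 * (f x + 1 * f (a + b - x)) = (f x + f (a + b - x)) / 2) by field. exact E.
    - apply ex_RInt_Reals_1. exact prh. }
  pose proof (@RiemannInt_P16 _ _ _ (ex_RInt_Reals_0 _ _ _ Fg)) as pr2.
  exists pr2.
  assert (Habs : RiemannInt pr2 = RiemannInt pr).
  { rewrite <- Vh. apply RiemannInt_P18; [lra|].
    intros x Hx. unfold fct_cte, f2.
    pose proof (fpos x (HI x ltac:(lra))). pose proof (fpos (a+b-x) (HI2 x ltac:(lra))).
    rewrite Rabs_right by lra. field. }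
  rewrite Habs.
  set (m := (a + b) / 2).
  assert (fm : 0 <= f m) by (apply fpos, HI; unfold m; lra).
  rewrite (Rabs_right (f m)) by lra.
  assert (key : (b - a) * f m <= 2 * h (1/2) * RiemannInt pr).
  { pose proof (@RiemannInt_P10 (fct_cte 0) _ a b (h (1/2)) (@RiemannInt_P14 a b 0) prs) as prk.
    assert (Hc := @RiemannInt_P19 _ _ a b (@RiemannInt_P14 a b (f m)) prk ltac:(lra)).
    rewrite RiemannInt_P15 in Hc.
    rewrite (@RiemannInt_P13 _ _ a b _ (@RiemannInt_P14 a b 0) prs prk) in Hc.
    rewrite Vs, RiemannInt_P15 in Hc.
    assert (Hc' : f m * (b - a) <= 0 * (b - a) + h (1 / 2) * (2 * RiemannInt pr)).
    { apply Hc. intros x Hx. unfold fct_cte, f2.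
      pose proof (fconv x (a + b - x) (1/2) (HI x ltac:(lra)) (HI2 x ltac:(lra)) ltac:(lra)) as C.
      replace (1 - 1/2) with (1/2) in C by field.
      replace (1 / 2 * x + 1 / 2 * (a + b - x)) with m in C by (unfold m; field). lra. }
    lra. }
  assert (Hnn : 0 <= 1 / (b - a) * RiemannInt pr - 1 / (2 * h (1 / 2)) * f m).
  { apply Rge_le, Rge_minus, Rle_ge.
    apply Rmult_le_reg_l with (2 * h (1/2) * (b - a)). nra.
    replace (2 * h (1 / 2) * (b - a) * (1 / (2 * h (1 / 2)) * f m)) with ((b-a) * f m) by (field; lra).
    replace (2 * h (1 / 2) * (b - a) * (1 / (b - a) * RiemannInt pr)) with (2 * h (1/2) * RiemannInt pr) by (field; lra).
    lra. }
  rewrite Rabs_right by lra. lra.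
Qed.
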